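(* Let $G=A*_C\varphi$ with $|A/C|\ge2$, $|A/\varphi(C)|\ge2$ and generating set $\{t\}\cup(A\setminus\{1\})$. Let $w=t^{n_1}a_1t^{n_2}a_2\cdots t^{n_I}a_I$ be the word (of length $\sum_i|n_i|+I$) with $a_i\in A\setminus\{1\}$ single letters and $n_i\in\mathbb{Z}\setminus\{0\}$. Suppose either Condition I: $n_1,n_3,n_5,\dots>0$, $n_2,n_4,\dots<0$, $a_1,a_3,a_5,\dots\notin C$, $a_2,a_4,\dots\notin\varphi(C)$; or Condition II: $n_1,n_3,\dots<0$, $n_2,n_4,\dots>0$, $a_1,a_3,\dots\notin\varphi(C)$, $a_2,a_4,\dots\notin C$. Then $w$ is a geodesic, i.e. its length equals the minimal length of a word representing $\bar w$.
   Context: $A$ is a group, $C\le A$, $\varphi:C\to A$ an injective homomorphism, $G=A*_C\varphi=\langle A,t\mid c=t^{-1}\varphi(c)t\ \forall c\in C\rangle$. Words are finite sequences of letters from $\{t,t^{-1}\}\cup(A\setminus\{1\})$, $t^{n}$ denoting $|n|$ consecutive letters $t^{\pm1}$; $\bar w$ is the element represented. *)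

(* Defs.v *)
(* HNN extension G = A *_C phi given by its standard monoid
   presentation on words over {t, t^-1} u A. *)
From Stdlib Require Import List ZArith Relations.
Import ListNotations.

Record Group := {
  gcar :> Type;
  gmul : gcar -> gcar -> gcar;
  gone : gcar;
  ginv : gcar -> gcar;
  gmulA : forall x y z, gmul x (gmul y z) = gmul (gmul x y) z;
  gmul1l : forall x, gmul gone x = x;
  gmul1r : forall x, gmul x gone = x;
  gmulVl : forall x, gmul (ginv x) x = gone;
  gmulVr : forall x, gmul x (ginv x) = gone
}.

Definition is_subgroup (A : Group) (C : A -> Prop) : Prop :=
  C (gone A) /\ (forall x y, C x -> C y -> C (gmul A x y)) /\
  (forall x, C x -> C (ginv A x)).

Definition inj_hom_on (A : Group) (C : A -> Prop) (phi : A -> A) : Prop :=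
  (forall x y, C x -> C y -> phi (gmul A x y) = gmul A (phi x) (phi y)) /\
  (forall x y, C x -> C y -> phi x = phi y -> x = y).

Inductive letter (A : Type) : Type :=
| Lt : letter A
| Ltinv : letter A
| La : A -> letter A.
Arguments Lt {A}. Arguments Ltinv {A}. Arguments La {A} _.

Definition word (A : Type) := list (letter A).

Definition valid_word (A : Group) (w : word A) : Prop :=
  forall a, In (La a) w -> a <> gone A.

Inductive hnn_rel (A : Group) (C : A -> Prop) (phi : A -> A) :
  word A -> word A -> Prop :=
| rel_ttinv : hnn_rel A C phi [Lt; Ltinv] []
| rel_tinvt : hnn_rel A C phi [Ltinv; Lt] []
| rel_mul : forall a b, gmul A a b <> gone A ->
    hnn_rel A C phi [La a; La b] [La (gmul A a b)]
| rel_mul1 : forall a b, gmul A a b = gone A ->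
    hnn_rel A C phi [La a; La b] []
| rel_conj : forall c, C c ->
    hnn_rel A C phi [La c] [Ltinv; La (phi c); Lt].

Inductive hnn_step (A : Group) (C : A -> Prop) (phi : A -> A) :
  word A -> word A -> Prop :=
| step_intro : forall p s l r, hnn_rel A C phi l r ->
    hnn_step A C phi (p ++ l ++ s) (p ++ r ++ s).

Definition hnn_equiv (A : Group) (C : A -> Prop) (phi : A -> A) :
  word A -> word A -> Prop :=
  clos_refl_sym_trans _ (hnn_step A C phi).

Definition tpow {A : Type} (n : Z) : word A :=
  if (0 <? n)%Z then repeat Lt (Z.to_nat n) else repeat Ltinv (Z.to_nat (- n)).

Definition build_word {A : Type} (l : list (Z * A)) : word A :=
  flat_map (fun p => tpow (fst p) ++ [La (snd p)]) l.

Definition geodesic (A : Group) (C : A -> Prop) (phi : A -> A) (w : word A) : Prop :=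
  forall v, valid_word A v -> hnn_equiv A C phi v w -> length w <= length v.

(* Condition I (0-based index k: k even <-> paper's index odd) *)
Definition condI (A : Group) (C : A -> Prop) (phi : A -> A) (l : list (Z * A)) : Prop :=
  forall k, k < length l ->
    let n := fst (nth k l (0%Z, gone A)) in
    let a := snd (nth k l (0%Z, gone A)) in
    if Nat.even k then (0 < n)%Z /\ ~ C a
    else (n < 0)%Z /\ ~ (exists c, C c /\ phi c = a).

Definition condII (A : Group) (C : A -> Prop) (phi : A -> A) (l : list (Z * A)) : Prop :=
  forall k, k < length l ->
    let n := fst (nth k l (0%Z, gone A)) in
    let a := snd (nth k l (0%Z, gone A)) in
    if Nat.even k then (n < 0)%Z /\ ~ (exists c, C c /\ phi c = a)
    else (0 < n)%Z /\ ~ C a.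

(* Main.v *)
Require Import Defs.
From Stdlib Require Import List ZArith Lia Relations Bool.
From Stdlib Require Import ClassicalEpsilon FunctionalExtensionality PropExtensionality.
Import ListNotations.

Section HNN.
Variable A : Group.
Variable C : A -> Prop.
Variable phi : A -> A.
Hypothesis HC : is_subgroup A C.
Hypothesis Hphi : inj_hom_on A C phi.

Local Infix "**" := (gmul A) (at level 40, left associativity).
Local Notation e := (gone A).
Local Notation inv := (ginv A).

Lemma inv_unique (x y : A) : x ** y = e -> y = inv x.
Proof.
  intro H. rewrite <- (gmul1l A y). rewrite <- (gmulVl A x).
  rewrite <- gmulA, H, gmul1r. reflexivity.
Qed.

Lemma inv_inv (x : A) : inv (inv x) = x.
Proof. symmetry. apply inv_unique. apply gmulVl. Qed.

Lemma inv_mul (x y : A) : inv (x ** y) = inv y ** inv x.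
Proof.
  symmetry. apply inv_unique.
  rewrite gmulA, <- (gmulA A x y), gmulVr, gmul1r, gmulVr. reflexivity.
Qed.

Lemma inv_e : inv e = e.
Proof. symmetry. apply inv_unique. apply gmul1l. Qed.

Lemma sg_mul_l (P : A -> Prop) (HP : is_subgroup A P) x y :
  P x -> P (x ** y) -> P y.
Proof.
  destruct HP as [H1 [H2 H3]]. intros Hx Hxy.
  replace y with (inv x ** (x ** y)).
  - apply H2; auto.
  - rewrite gmulA, gmulVl, gmul1l. reflexivity.
Qed.

Lemma sg_mul_r (P : A -> Prop) (HP : is_subgroup A P) x y :
  P y -> P (x ** y) -> P x.
Proof.
  destruct HP as [H1 [H2 H3]]. intros Hy Hxy.
  replace x with ((x ** y) ** inv y).
  - apply H2; auto.
  - rewrite <- gmulA, gmulVr, gmul1r. reflexivity.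
Qed.

Definition PC (y : A) : Prop := exists c, C c /\ phi c = y.

Lemma phi_e : phi e = e.
Proof.
  destruct HC as [H1 [H2 H3]]. destruct Hphi as [Hm Hi].
  pose proof (Hm e e H1 H1) as E. rewrite gmul1l in E.
  assert (E2 : phi e ** e = phi e ** phi e) by (rewrite gmul1r; exact E).
  assert (forall a b c : A, a ** b = a ** c -> b = c) as canc.
  { intros a b c Hab. rewrite <- (gmul1l A b), <- (gmul1l A c), <- (gmulVl A a),
      <- !gmulA, Hab. reflexivity. }
  symmetry. eapply canc. exact E2.
Qed.

Lemma phi_inv c : C c -> phi (inv c) = inv (phi c).
Proof.
  intro Hc. destruct HC as [H1 [H2 H3]]. destruct Hphi as [Hm Hi].
  apply inv_unique. rewrite <- Hm; auto. rewrite gmulVr. apply phi_e.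
Qed.

Lemma PC_sub : is_subgroup A PC.
Proof.
  destruct HC as [H1 [H2 H3]]. destruct Hphi as [Hm Hi].
  split; [|split].
  - exists e. split; auto. apply phi_e.
  - intros x y [c [Hc <-]] [d [Hd <-]]. exists (c ** d). split; auto.
  - intros x [c [Hc <-]]. exists (inv c). split; auto. apply phi_inv; auto.
Qed.

Definition sub (b : bool) : A -> Prop := if b then C else PC.

Lemma sub_sg b : is_subgroup A (sub b).
Proof. destruct b; simpl; [exact HC | exact PC_sub]. Qed.

Lemma sub_e b : sub b e.
Proof. destruct (sub_sg b) as [H _]. exact H. Qed.
Lemma sub_mul b x y : sub b x -> sub b y -> sub b (x ** y).
Proof. destruct (sub_sg b) as [_ [H _]]. apply H. Qed.
Lemma sub_inv b x : sub b x -> sub b (inv x).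
Proof. destruct (sub_sg b) as [_ [_ H]]. apply H. Qed.

Definition psi (y : A) : A := epsilon (inhabits e) (fun c => C c /\ phi c = y).

Lemma psi_spec y : PC y -> C (psi y) /\ phi (psi y) = y.
Proof. intro H. unfold psi. apply epsilon_spec. exact H. Qed.

Lemma psi_phi c : C c -> psi (phi c) = c.
Proof.
  intro Hc. destruct (psi_spec (phi c)) as [H1 H2]. { exists c; auto. }
  destruct Hphi as [_ Hi]. apply Hi; auto.
Qed.

Definition mapb (b : bool) : A -> A := if b then phi else psi.

Lemma mapb_sub b x : sub b x -> sub (negb b) (mapb b x).
Proof.
  destruct b; simpl; intro H.
  - exists x; auto.
  - apply psi_spec; auto.
Qed.

Lemma mapb_hom b x y : sub b x -> sub b y -> mapb b (x ** y) = mapb b x ** mapb b y.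
Proof.
  destruct b; simpl; intros Hx Hy.
  - apply (proj1 Hphi); auto.
  - destruct Hx as [c [Hc <-]]. destruct Hy as [d [Hd <-]].
    destruct HC as [H1 [H2 H3]].
    destruct Hphi as [Hm _]. rewrite <- Hm; auto. rewrite !psi_phi; auto.
Qed.

Lemma mapb_inv b x : sub b x -> mapb (negb b) (mapb b x) = x.
Proof.
  destruct b; simpl; intro H.
  - apply psi_phi; auto.
  - destruct (psi_spec x H); auto.
Qed.

Definition em := excluded_middle_informative.

Definition rep (b : bool) (x : A) : A :=
  if em (sub b x) then e else epsilon (inhabits e) (fun y => sub b (x ** inv y)).

Lemma rep_spec b g : sub b (g ** inv (rep b g)).
Proof.
  unfold rep. destruct (em (sub b g)) as [H|H].
  - rewrite inv_e, gmul1r. exact H.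
  - apply (epsilon_spec (inhabits e) (fun y => sub b (g ** inv y))).
    exists g. simpl. rewrite gmulVr. apply sub_e.
Qed.

Lemma rep_sub b g : sub b g -> rep b g = e.
Proof. intro H. unfold rep. destruct (em (sub b g)); tauto. Qed.

Lemma rep_e_sub b g : rep b g = e -> sub b g.
Proof. intro H. pose proof (rep_spec b g) as S. rewrite H, inv_e, gmul1r in S. exact S. Qed.

Lemma rep_sub_iff b g : sub b (rep b g) -> sub b g.
Proof.
  intro H. eapply (sg_mul_r _ (sub_sg b) g (inv (rep b g))).
  - apply sub_inv; auto.
  - apply rep_spec.
Qed.

Lemma rep_coset b c x : sub b c -> rep b (c ** x) = rep b x.
Proof.
  intro Hc. unfold rep.
  destruct (em (sub b (c ** x))) as [H1|H1]; destruct (em (sub b x)) as [H2|H2].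
  - reflexivity.
  - exfalso. apply H2. eapply sg_mul_l; [apply sub_sg| exact Hc | exact H1].
  - exfalso. apply H1. apply sub_mul; auto.
  - f_equal. apply functional_extensionality. intro y.
    apply propositional_extensionality. rewrite <- gmulA. split; intro H.
    + eapply sg_mul_l; [apply sub_sg | exact Hc | exact H].
    + apply sub_mul; auto.
Qed.

Lemma rep_idem b g : rep b (rep b g) = rep b g.
Proof.
  set (r := rep b g).
  assert (E : r = inv (g ** inv r) ** g).
  { rewrite inv_mul, inv_inv, <- gmulA, gmulVl, gmul1r. reflexivity. }
  rewrite E at 1. apply rep_coset. apply sub_inv. apply rep_spec.
Qed.

Definition state : Type := prod (gcar A) (list (bool * gcar A)).

Definition gen (b : bool) (g : A) (L : list (bool * gcar A)) : state :=
  (mapb b (g ** inv (rep b g)), (b, rep b g) :: L).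

Definition act_T (b : bool) (x : state) : state :=
  let '(g, L) := x in
  match L with
  | (b', r1) :: L' =>
      if Bool.eqb b' (negb b) then
        (if em (sub b g) then (mapb b g ** r1, L') else gen b g L)
      else gen b g L
  | [] => gen b g L
  end.

Definition act_a (a : A) (x : state) : state := (a ** fst x, snd x).

Definition act_letter (l : letter A) : state -> state :=
  match l with Lt => act_T true | Ltinv => act_T false | La a => act_a a end.

Definition act (w : word A) (x : state) : state := fold_right act_letter x w.

Lemma act_app u v x : act (u ++ v) x = act u (act v x).
Proof. unfold act. apply fold_right_app. Qed.

Definition nopinch b g (L : list (bool * gcar A)) : Prop :=
  forall r1 L', L = (negb b, r1) :: L' -> ~ sub b g.

Lemma act_T_cases b g L :
  (exists r1 L', L = (negb b, r1) :: L' /\ sub b g /\ act_T b (g, L) = (mapb b g ** r1, L'))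
  \/ (nopinch b g L /\ act_T b (g, L) = gen b g L).
Proof.
  destruct L as [|[b' r1] L'].
  - right. split; [intros ? ? H; discriminate | reflexivity].
  - simpl. destruct (Bool.eqb b' (negb b)) eqn:E.
    + apply Bool.eqb_prop in E. subst b'.
      destruct (em (sub b g)) as [H|H].
      * left. eauto.
      * right. split; [intros ? ? _; exact H | reflexivity].
    + right. split; [|reflexivity]. intros r L2 Heq. inversion Heq; subst.
      rewrite Bool.eqb_reflx in E. discriminate.
Qed.

Fixpoint validL (L : list (bool * gcar A)) : Prop :=
  match L with
  | [] => True
  | (b, r) :: L' =>
      rep b r = r /\
      (match L' with (b', _) :: _ => b' = negb b -> ~ sub b r | [] => True end) /\
      validL L'
  end.

Definition valid (x : state) : Prop := validL (snd x).

Lemma valid_gen b g L : nopinch b g L -> validL L -> validL (snd (gen b g L)).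
Proof.
  intros Hn HL. simpl. split; [apply rep_idem|]. split; [|exact HL].
  destruct L as [|[b' r'] L']; [exact I|].
  intros Hb Hs. subst b'. apply (Hn r' L' eq_refl). apply rep_sub_iff. exact Hs.
Qed.

Lemma valid_act_T b x : valid x -> valid (act_T b x).
Proof.
  destruct x as [g L]. intro H.
  destruct (act_T_cases b g L) as [[r1 [L' [-> [_ E]]]] | [Hn E]]; rewrite E.
  - destruct H as [_ [_ H]]. exact H.
  - apply valid_gen; auto.
Qed.

Lemma valid_act w x : valid x -> valid (act w x).
Proof.
  induction w as [|l w IH]; intro H; simpl; [exact H|].
  destruct l; simpl.
  - apply valid_act_T; auto.
  - apply valid_act_T; auto.
  - unfold act_a, valid. simpl. apply IH; auto.
Qed.

Lemma act_T_inverse b x : valid x -> act_T b (act_T (negb b) x) = x.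
Proof.
  destruct x as [g L]. intro HV.
  destruct (act_T_cases (negb b) g L) as [[r1 [L' [HL [Hs E]]]] | [Hn E]]; rewrite E.
  - rewrite negb_involutive in HL. subst L.
    destruct HV as [Hr [Hnp HV]].
    set (m := mapb (negb b) g).
    assert (Hm : sub b m).
    { pose proof (mapb_sub _ _ Hs) as X. rewrite negb_involutive in X. exact X. }
    destruct (act_T_cases b (m ** r1) L') as [[r2 [L2 [HL2 [Hs2 _]]]] | [Hn2 E2]].
    + exfalso. subst L'. apply (Hnp eq_refl).
      eapply sg_mul_l; [apply sub_sg | exact Hm | exact Hs2].
    + rewrite E2. unfold gen. rewrite rep_coset by exact Hm. rewrite Hr.
      rewrite <- gmulA, gmulVr, gmul1r. unfold m.
      pose proof (mapb_inv (negb b) g Hs) as X. rewrite negb_involutive in X.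
      rewrite X. reflexivity.
  - unfold gen.
    set (r := rep (negb b) g).
    assert (Hs : sub (negb b) (g ** inv r)) by apply rep_spec.
    destruct (act_T_cases b (mapb (negb b) (g ** inv r)) ((negb b, r) :: L))
      as [[r2 [L2 [HL2 [Hs2 E2]]]] | [Hn2 E2]].
    + rewrite E2. inversion HL2; subst r2 L2.
      pose proof (mapb_inv (negb b) _ Hs) as X. rewrite negb_involutive in X.
      rewrite X, <- gmulA, gmulVl, gmul1r. reflexivity.
    + exfalso. apply (Hn2 r L eq_refl).
      pose proof (mapb_sub _ _ Hs) as X. rewrite negb_involutive in X. exact X.
Qed.

Lemma act_T_conj b c x : sub b c ->
  act_T b (act_a c x) = act_a (mapb b c) (act_T b x).
Proof.
  destruct x as [g L]. intro Hc. unfold act_a at 1. simpl fst; simpl snd.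
  assert (Hiff : sub b (c ** g) <-> sub b g).
  { split; intro H.
    - eapply sg_mul_l; [apply sub_sg | exact Hc | exact H].
    - apply sub_mul; auto. }
  destruct (act_T_cases b g L) as [[r1 [L' [HL [Hs E]]]] | [Hn E]]; rewrite E.
  - destruct (act_T_cases b (c ** g) L) as [[r2 [L2 [HL2 [Hs2 E2]]]] | [Hn2 E2]].
    + rewrite E2. rewrite HL in HL2. inversion HL2; subst r2 L2.
      unfold act_a; simpl. rewrite mapb_hom by auto. rewrite gmulA. reflexivity.
    + exfalso. apply (Hn2 r1 L' HL). apply Hiff. exact Hs.
  - destruct (act_T_cases b (c ** g) L) as [[r2 [L2 [HL2 [Hs2 E2]]]] | [Hn2 E2]].
    + exfalso. apply (Hn r2 L2 HL2). apply Hiff. exact Hs2.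
    + rewrite E2. unfold gen, act_a. simpl. rewrite rep_coset by exact Hc.
      rewrite <- gmulA. rewrite mapb_hom; auto. apply rep_spec.
Qed.

Lemma rel_act l r : hnn_rel A C phi l r -> forall x, valid x -> act l x = act r x.
Proof.
  intros H x HV. destruct H; simpl.
  - apply (act_T_inverse true x HV).
  - apply (act_T_inverse false x HV).
  - unfold act_a. simpl. rewrite gmulA. reflexivity.
  - unfold act_a. simpl. rewrite gmulA, H. rewrite gmul1l. destruct x; reflexivity.
  - change (act_a c x = act_T false (act_a (mapb true c) (act_T true x))).
    rewrite <- act_T_conj by exact H.
    symmetry. apply (act_T_inverse false). unfold valid, act_a. simpl. exact HV.
Qed.

Lemma equiv_act u v : hnn_equiv A C phi u v -> forall x, valid x -> act u x = act v x.
Proof.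
  intro H. induction H as [u v Hs | u | u v _ IH | u v w _ IH1 _ IH2]; intros x HV.
  - destruct Hs as [p s l r Hr]. rewrite !act_app. f_equal.
    apply rel_act; auto. apply valid_act; auto.
  - reflexivity.
  - symmetry. auto.
  - rewrite IH1, IH2; auto.
Qed.
Fixpoint chg (b : bool) (L : list (bool * gcar A)) : nat :=
  match L with
  | [] => 0
  | (b', _) :: L' => (if Bool.eqb b b' then 0 else 1) + chg b' L'
  end.

Definition chgL (L : list (bool * gcar A)) : nat :=
  match L with [] => 0 | (b, _) :: L' => chg b L' end.

Definition lastnz (L : list (bool * gcar A)) : nat :=
  match L with
  | [] => 0
  | _ :: _ => if em (snd (last L (true, e)) = e) then 0 else 1
  end.

Definition fm (x : state) : nat :=
  let '(g, L) := x in
  match L with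
  | [] => if em (g = e) then 0 else 1
  | (b, _) :: L' => length L + chg b L' + lastnz L + (if em (sub (negb b) g) then 0 else 1)
  end.

Lemma lastnz_cons2 p q L : lastnz (p :: q :: L) = lastnz (q :: L).
Proof. reflexivity. Qed.

Lemma lastnz_le L : lastnz L <= 1.
Proof. destruct L; simpl; [lia|]. destruct em; lia. Qed.

Lemma fm_act_a a x : fm (act_a a x) <= S (fm x).
Proof.
  destruct x as [g [|[b r] L]]; unfold act_a; simpl;
  repeat destruct em; lia.
Qed.

Lemma fm_act_T b x : fm (act_T b x) <= S (fm x).
Proof.
  destruct x as [g L].
  destruct (act_T_cases b g L) as [[r1 [L' [HL [Hs E]]]] | [Hn E]]; rewrite E.
  - subst L. destruct L' as [|[b2 r2] L2].
    + simpl. destruct em; lia.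
    + change (fm (mapb b g ** r1, (b2, r2) :: L2) <= S (fm (g, (negb b, r1) :: (b2, r2) :: L2))).
      unfold fm. rewrite lastnz_cons2. simpl length. simpl chg.
      repeat destruct em; lia.
  - unfold gen.
    assert (Hl : sub (negb b) (mapb b (g ** inv (rep b g)))) by (apply mapb_sub, rep_spec).
    destruct L as [|[b' r'] L'].
    + unfold fm, lastnz. simpl last. simpl snd. simpl length. simpl chg.
      destruct (em (sub (negb b) (mapb b (g ** inv (rep b g))))) as [_|X]; [|contradiction].
      destruct (em (rep b g = e)) as [R|R]; destruct (em (g = e)) as [G|G]; try lia.
      exfalso. apply R. apply rep_sub. rewrite G. apply sub_e.
    + change (fm (mapb b (g ** inv (rep b g)), (b, rep b g) :: (b', r') :: L')
         <= S (fm (g, (b', r') :: L'))).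
      unfold fm. rewrite lastnz_cons2.
      destruct (em (sub (negb b) _)) as [_|X]; [|contradiction].
      simpl length. simpl chg.
      destruct (Bool.eqb b b') eqn:Eb.
      * lia.
      * assert (b' = negb b) by (destruct b, b'; simpl in *; congruence). subst b'.
        rewrite negb_involutive.
        destruct (em (sub b g)) as [Y|_]; [exfalso; exact (Hn r' L' eq_refl Y)|]. lia.
Qed.

Definition x0 : state := (e, []).

Lemma fm_act_bound v : fm (act v x0) <= length v.
Proof.
  induction v as [|l v IH]; simpl.
  - destruct em; [lia|congruence].
  - change (fm (act_letter l (act v x0)) <= S (length v)).
    destruct l as [| |a].
    + exact (Nat.le_trans _ _ _ (fm_act_T true _) (le_n_S _ _ IH)).
    + exact (Nat.le_trans _ _ _ (fm_act_T false _) (le_n_S _ _ IH)).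
    + exact (Nat.le_trans _ _ _ (fm_act_a a _) (le_n_S _ _ IH)).
Qed.

Definition Q (s : bool) (p : Z * gcar A) : Prop :=
  (if s then (0 < fst p)%Z else (fst p < 0)%Z) /\ ~ sub s (snd p).

Fixpoint altR (s : bool) (l : list (Z * gcar A)) : Prop :=
  match l with [] => True | p :: l' => Q s p /\ altR (negb s) l' end.

Lemma altR_of l s d :
  (forall k, k < length l -> (if Nat.even k then Q s (nth k l d) else Q (negb s) (nth k l d)))
  -> altR s l.
Proof.
  revert s. induction l as [|p l IH]; intros s H; simpl; [exact I|].
  split.
  - apply (H 0). simpl. lia.
  - apply IH. intros k Hk. specialize (H (S k)).
    rewrite Nat.even_succ, <- Nat.negb_even in H. cbn [nth length] in H.
    destruct (Nat.even k); simpl in *; rewrite ?negb_involutive; apply H; lia.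
Qed.

Definition tletter (s : bool) : letter A := if s then Lt else Ltinv.

Lemma act_tletter s x : act_letter (tletter s) x = act_T s x.
Proof. destruct s; reflexivity. Qed.

Lemma tpow_eq s p : Q s p -> exists k, @tpow (gcar A) (fst p) = repeat (tletter s) (S k).
Proof.
  destruct p as [n a]. unfold Q, tpow. simpl. intros [Hn _]. destruct s.
  - exists (Z.to_nat n - 1). replace (0 <? n)%Z with true by (symmetry; apply Z.ltb_lt; exact Hn).
    replace (Z.to_nat n) with (S (Z.to_nat n - 1)) at 1 by lia. reflexivity.
  - exists (Z.to_nat (- n) - 1). replace (0 <? n)%Z with false by (symmetry; apply Z.ltb_ge; lia).
    replace (Z.to_nat (- n)) with (S (Z.to_nat (- n) - 1)) at 1 by lia. reflexivity.
Qed.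

Lemma TP s k g L : nopinch s g L ->
  exists g' M, act (repeat (tletter s) (S k)) (g, L) = (g', M ++ (s, rep s g) :: L)
    /\ Forall (fun p => fst p = s) M /\ length M = k /\ sub (negb s) g'.
Proof.
  intro Hn. induction k as [|k IH].
  - exists (mapb s (g ** inv (rep s g))), []. simpl. rewrite act_tletter.
    destruct (act_T_cases s g L) as [[r1 [L' [HL [Hs E]]]] | [_ E]].
    + exfalso. exact (Hn r1 L' HL Hs).
    + rewrite E. split; [reflexivity|]. split; auto. split; auto.
      apply mapb_sub, rep_spec.
  - destruct IH as [g' [M [E [HM [HlM _]]]]].
    change (repeat (tletter s) (S (S k))) with (tletter s :: repeat (tletter s) (S k)).
    change (act (tletter s :: repeat (tletter s) (S k)) (g, L)) with
      (act_letter (tletter s) (act (repeat (tletter s) (S k)) (g, L))).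
    rewrite E, act_tletter.
    destruct (act_T_cases s g' (M ++ (s, rep s g) :: L)) as [[r1 [L' [HL [Hs E2]]]] | [_ E2]].
    + exfalso. destruct M as [|p M].
      * simpl in HL. inversion HL. destruct s; discriminate.
      * simpl in HL. inversion HL. subst p. inversion HM. simpl in *. destruct s; discriminate.
    + rewrite E2. unfold gen. eexists; exists ((s, rep s g') :: M). split; [reflexivity|].
      split; [constructor; auto |]. split; [simpl; lia|]. apply mapb_sub, rep_spec.
Qed.

Lemma chg_same s M T : Forall (fun p => fst p = s) M -> chg s (M ++ T) = chg s T.
Proof.
  induction 1 as [|p M Hp HM IH]; auto. destruct p as [b r]. simpl in *. subst b.
  rewrite Bool.eqb_reflx. simpl. exact IH.
Qed.

Lemma chgL_new s M r T : Forall (fun p => fst p = s) M -> chgL (M ++ (s, r) :: T) = chg s T.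
Proof.
  intro HM. destruct M as [|[b r'] M]; simpl; [reflexivity|].
  assert (Hb : b = s) by (inversion HM; auto). subst b.
  assert (HM' : Forall (fun p => fst p = s) M) by (inversion HM; auto).
  rewrite chg_same by auto.
  simpl. rewrite Bool.eqb_reflx. reflexivity.
Qed.

Lemma lastnz_app P T : T <> [] -> lastnz (P ++ T) = lastnz T.
Proof.
  intro HT. induction P as [|p P IH]; [reflexivity|].
  destruct P as [|q P].
  - destruct T as [|t T]; [congruence|]. change ([p] ++ t :: T) with (p :: t :: T).
    rewrite lastnz_cons2. reflexivity.
  - change ((p :: q :: P) ++ T) with (p :: q :: (P ++ T)). rewrite lastnz_cons2. exact IH.
Qed.

Definition headsign (L : list (bool * gcar A)) : option bool :=
  match L with [] => None | (b, _) :: _ => Some b end.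

Lemma headsign_new s M r T : Forall (fun p => fst p = s) M -> headsign (M ++ (s, r) :: T) = Some s.
Proof. intro HM. destruct HM as [|p M Hp _]; [reflexivity|]. destruct p; simpl in *; congruence. Qed.

Lemma W l s : altR s l -> l <> [] ->
  exists g K, act (build_word l) x0 = (g, K) /\ headsign K = Some s /\ sub (negb s) g /\
    length (build_word l) <= length K + chgL K + lastnz K.
Proof.
  revert s. induction l as [|[n a] l IH]; intros s Halt Hne; [congruence|].
  destruct Halt as [Hq Halt].
  destruct (tpow_eq s (n, a) Hq) as [k Hk]. simpl fst in Hk.
  unfold build_word. simpl flat_map. fold (@build_word (gcar A) l).
  rewrite <- app_assoc, !act_app, Hk.
  destruct Hq as [_ Ha]. simpl snd in Ha.
  rewrite !length_app, repeat_length.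
  destruct l as [|p l'].
  - change (act (@build_word (gcar A) []) x0) with x0.
    change (act [La a] x0) with (a ** e, @nil (bool * gcar A)). rewrite gmul1r.
    change (length (@build_word (gcar A) [])) with 0.
    destruct (TP s k a [] ltac:(intros ? ? H; discriminate)) as [g' [M [E [HM [HlM HsG]]]]].
    rewrite E. exists g', (M ++ [(s, rep s a)]). split; [reflexivity|].
    split; [apply headsign_new; auto|].
    split.
    + exact HsG.
    + rewrite chgL_new by auto. rewrite lastnz_app by discriminate.
      unfold lastnz. simpl last. simpl snd.
      destruct (em (rep s a = e)) as [R|R]; [exfalso; apply Ha, rep_e_sub, R|].
      rewrite length_app. simpl chg. simpl length. lia.
  - destruct (IH (negb s) Halt ltac:(discriminate)) as [g [K [E1 [Hh [Hg Hb]]]]].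
    rewrite negb_involutive in Hg. rewrite E1.
    change (act [La a] (g, K)) with (a ** g, K).
    destruct K as [|[b1 r1] K1]; [discriminate|]. simpl in Hh. inversion Hh; subst b1.
    assert (Hn : nopinch s (a ** g) ((negb s, r1) :: K1)).
    { intros ? ? _ Hs. apply Ha. eapply sg_mul_r; [apply sub_sg | exact Hg | exact Hs]. }
    destruct (TP s k (a ** g) _ Hn) as [g' [M [E [HM [HlM HsG]]]]].
    rewrite E. eexists g', _. split; [reflexivity|].
    split; [apply headsign_new; auto|].
    split.
    + exact HsG.
    + rewrite chgL_new by auto. rewrite lastnz_app by discriminate.
      assert (Hc : chg s ((negb s, r1) :: K1) = 1 + chgL ((negb s, r1) :: K1)).
      { destruct s; reflexivity. }
      rewrite lastnz_cons2, Hc, length_app.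
      change (length [La a]) with 1. change (length ((s, rep s (a ** g)) :: (negb s, r1) :: K1))
        with (S (length ((negb s, r1) :: K1))). lia.
Qed.

Lemma fm_lower g K : K <> [] -> length K + chgL K + lastnz K <= fm (g, K).
Proof.
  intro HK. destruct K as [|[b r] K']; [congruence|].
  unfold fm. simpl chgL. destruct em; lia.
Qed.

Lemma main_sec l : (condI A C phi l \/ condII A C phi l) -> geodesic A C phi (build_word l).
Proof.
  intros Hcond v _ Heq.
  destruct l as [|p l'] eqn:El.
  - simpl. lia.
  - rewrite <- El in *.
    assert (Hs : exists s, altR s l).
    { destruct Hcond as [H|H]; [exists true|exists false];
        apply altR_of with (d := (0%Z, e)); intros k Hk; specialize (H k Hk);
        cbv zeta in H; destruct (Nat.even k); unfold Q; exact H. }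
    destruct Hs as [s Hs].
    destruct (W l s Hs ltac:(rewrite El; discriminate)) as [g [K [E [Hh [_ Hb]]]]].
    assert (Ev : act v x0 = act (build_word l) x0) by (apply equiv_act; [exact Heq | exact I]).
    pose proof (fm_act_bound v) as Hv. rewrite Ev, E in Hv.
    assert (HK : K <> []) by (intro; subst; discriminate).
    pose proof (fm_lower g K HK). lia.
Qed.

End HNN.

Theorem lemma7p1 (A : Group) (C : A -> Prop) (phi : A -> A)
  (HC : is_subgroup A C) (Hphi : inj_hom_on A C phi)
  (HAC : exists a : A, ~ C a)
  (HAphiC : exists a : A, ~ (exists c, C c /\ phi c = a))
  (l : list (Z * A))
  (Hl : forall p, In p l -> fst p <> 0%Z /\ snd p <> gone A)
  (Hcond : condI A C phi l \/ condII A C phi l) :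
  geodesic A C phi (build_word l).
Proof.
  exact (main_sec A C phi HC Hphi l Hcond).
Qed.
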